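(* Let $\Omega\subset\mathbb{R}^3$ be a domain and $\mathbf{x}=\boldsymbol{\chi}(\mathbf{X})$ a smooth, one-to-one, invertible map of $\Omega$ onto $\omega$, with deformation gradient $F_{iI}=\partial x_i/\partial X_I$, Jacobian $\Lambda=\det\mathbf{F}>0$, and polar decomposition $\mathbf{F}=\mathbf{V}\mathbf{R}$ ($\mathbf{R}$ proper orthogonal, $\mathbf{V}$ symmetric positive definite with $\mathbf{V}^2=\mathbf{F}\mathbf{F}^t$). Define the vector field $\mathbf{b}(\mathbf{X})$ with components $b_K=R_{jK}\,\partial R_{jM}/\partial X_M$, i.e. $\mathbf{b}=\mathbf{R}^t\,\mathrm{Div}\,\mathbf{R}^t$, and suppose $\mathrm{Curl}\,\mathbf{b}=\nabla_{\mathbf{X}}\wedge\mathbf{b}=0$ in $\Omega$. Let $\beta$ be a function on $\Omega$ with $\nabla_{\mathbf{X}}\beta=\mathbf{b}$. Let $\kappa_0,\rho_0>0$ be constants. Then the normal acoustic fluid with energy density $$E_0=\kappa_0\big(\partial U_I/\partial X_I\big)^2+\rho_0\,\dot{\mathbf{U}}\cdot\dot{\mathbf{U}}\quad\text{in }\Omega$$ can be mapped to a metafluid with isotropic inertia, with energy density $$E=\lambda\big(V_{ij}\,\partial u_j/\partial x_i\big)^2+\rho\,\dot{\mathbf{u}}\cdot\dot{\mathbf{u}}\quad\text{in }\omega,\qquad \lambda=\Lambda^{-1}e^{-2\beta}\kappa_0,\quad \rho=\Lambda^{-1}e^{-2\beta}\rho_0,$$ in the sense that these energy densities are equivalent ($E\,\mathrm{d}v=E_0\,\mathrm{d}V$)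 under the correspondence of displacements $\mathbf{u}=e^{\beta}\mathbf{R}\mathbf{U}$.
   Context: Repeated indices are summed; upper-case indices refer to undeformed coordinates $\mathbf{X}$, lower-case to deformed coordinates $\mathbf{x}$; $\mathrm{d}v=\Lambda\,\mathrm{d}V$. Quantities in $\omega$ are evaluated at $\mathbf{x}=\boldsymbol{\chi}(\mathbf{X})$, and $\mathrm{Curl}$ is taken with respect to $\mathbf{X}$. *)

(* Defs.v *)
From HB Require Import structures.
From mathcomp Require Import all_boot all_order all_algebra.
From mathcomp Require Import all_classical all_reals all_analysis.
Set Implicit Arguments. Unset Strict Implicit. Unset Printing Implicit Defensive.
Import Order.TTheory GRing.Theory Num.Theory.
Import numFieldNormedType.Exports.
Local Open Scope ring_scope.
Local Open Scope classical_set_scope.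

Section Defs.
Variable R : realType.
Local Notation vec := 'rV[R]_3.
Local Notation mat := 'M[R]_3.

Definition evec (I : 'I_3) : vec := delta_mx 0 I.

Definition cmp (v : vec) (I : 'I_3) : R := v 0 I.

Definition pd (f : vec -> R) (I : 'I_3) (X : vec) : R := 'D_(evec I) f X.

Definition dotv (a b : vec) : R := \sum_(i < 3) a 0 i * b 0 i.

Definition defgrad (chi : vec -> vec) (X : vec) : mat :=
  \matrix_(i < 3, I < 3) pd (fun Y => cmp (chi Y) i) I X.

Definition bfield (Rot : vec -> mat) (X : vec) : vec :=
  \row_(K < 3) \sum_(j < 3) \sum_(M < 3)
     Rot X j K * pd (fun Y => Rot Y j M) M X.

Definition i0 : 'I_3 := inord 0.
Definition i1 : 'I_3 := inord 1.
Definition i2 : 'I_3 := inord 2.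
Definition curl (b : vec -> vec) (X : vec) : vec :=
  let d i k := pd (fun Y => cmp (b Y) k) i X in
  \row_(k < 3)
    (if (k : nat) == 0%N then d i1 i2 - d i2 i1
     else if (k : nat) == 1%N then d i2 i0 - d i0 i2
     else d i0 i1 - d i1 i0).

Definition has_gradient (beta : vec -> R) (g : vec) (X : vec) : Prop :=
  forall I : 'I_3, is_derive X (evec I) beta (g 0 I).

Definition E0 (kappa0 rho0 : R) (U : vec -> R -> vec) (X : vec) (t : R) : R :=
  kappa0 * (\sum_(I < 3) pd (fun Y => cmp (U Y t) I) I X) ^+ 2
  + rho0 * dotv (derive1 (U X) t) (derive1 (U X) t).

Definition Emeta (lam rho : R) (V : mat) (u : vec -> R -> vec) (x : vec) (t : R) : R :=
  lam * (\sum_(i < 3) \sum_(j < 3) V i j * pd (fun y => cmp (u y t) j) i x) ^+ 2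
  + rho * dotv (derive1 (u x) t) (derive1 (u x) t).

End Defs.

(* Main.v *)
Require Import Defs.
From HB Require Import structures.
From mathcomp Require Import all_boot all_order all_algebra.
From mathcomp Require Import all_classical all_reals all_analysis.
Import Order.TTheory GRing.Theory Num.Theory.
Import numFieldNormedType.Exports.
Local Open Scope ring_scope.
Local Open Scope classical_set_scope.
From mathcomp Require Import ring.

Section Alg.
Variable R : comRingType.

Lemma sum_pick (f : 'I_3 -> R) I : \sum_(K < 3) f K * (1%:M : 'M[R]_3) K I = f I.
Proof.
rewrite (bigD1 I) //= mxE eqxx mulr1 big1 ?addr0 // => K /negbTE KI.
by rewrite mxE KI mulr0.
Qed.

Lemma alg (e : R) (bb U : 'I_3 -> R) (dU : 'I_3 -> 'I_3 -> R)
  (r : 'I_3 -> 'I_3 -> R) (dr : 'I_3 -> 'I_3 -> 'I_3 -> R) :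
  (forall K M, \sum_(j < 3) r j K * r j M = (1%:M : 'M[R]_3) K M) ->
  (forall I K M, \sum_(j < 3) (dr I j K * r j M + r j K * dr I j M) = 0) ->
  (forall K, bb K = \sum_(j < 3) \sum_(M < 3) r j K * dr M j M) ->
  \sum_(I < 3) \sum_(j < 3) (e * bb I * (\sum_(K < 3) U K * r j K)
      + e * \sum_(K < 3) (dU I K * r j K + U K * dr I j K)) * r j I
  = e * \sum_(I < 3) dU I I.
Proof.
move=> orth dorth bdef.
have step : forall I, \sum_(j < 3) (e * bb I * (\sum_(K < 3) U K * r j K)
      + e * \sum_(K < 3) (dU I K * r j K + U K * dr I j K)) * r j I
    = e * bb I * U I + e * dU I I
      + e * \sum_(K < 3) U K * \sum_(j < 3) dr I j K * r j I.
  move=> I.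
  transitivity (\sum_(j < 3) \sum_(K < 3) (e * bb I * (U K * (r j K * r j I))
        + e * (dU I K * (r j K * r j I)) + e * (U K * (dr I j K * r j I)))).
    apply: eq_bigr => j _.
    rewrite !big_ord_recr !big_ord0 /=; ring.

  rewrite exchange_big /=.
  transitivity (\sum_(K < 3) (e * bb I * (U K * (1%:M : 'M[R]_3) K I)
     + e * (dU I K * (1%:M : 'M[R]_3) K I)
     + e * (U K * \sum_(j < 3) dr I j K * r j I))).
    apply: eq_bigr => K _; rewrite -orth !mulr_sumr -!big_split /=.
    by apply: eq_bigr => j _; ring.
  by rewrite !big_split /= -!mulr_sumr !sum_pick.
rewrite (eq_bigr _ (fun I _ => step I)) big_split /= big_split /=.
have H0 : \sum_(i < 3) bb i * U i
    + \sum_(i < 3) \sum_(K < 3) U K * \sum_(j < 3) dr i j K * r j i = 0.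
  rewrite [X in _ + X]exchange_big /= -big_split /=; apply: big1 => K _.
  rewrite -mulr_sumr mulrC -mulrDr bdef exchange_big /= -big_split /=.
  rewrite big1 ?mulr0 // => M _; rewrite -big_split /= -[RHS](dorth M K M).
  by apply: eq_bigr => j _; rewrite addrC.
transitivity (e * (\sum_(i < 3) bb i * U i
    + \sum_(i < 3) \sum_(K < 3) U K * \sum_(j < 3) dr i j K * r j i)
    + e * \sum_(I < 3) dU I I); last by rewrite H0 mulr0 add0r.
rewrite !mulrDr !mulr_sumr addrAC; congr (_ + _ + _); apply: eq_bigr => i _.
  by rewrite mulrA.
Qed.


Lemma trace_alg (D : 'I_3 -> 'I_3 -> R) (F Vm Rm : 'M[R]_3) :
  F = Vm *m Rm -> Rm *m Rm^T = 1%:M ->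
  \sum_(I < 3) \sum_(j < 3) (\sum_(i < 3) D j i * F i I) * Rm j I
  = \sum_(i < 3) \sum_(j < 3) Vm i j * D j i.
Proof.
move=> FV RRt.
have FRt : F *m Rm^T = Vm by rewrite FV -mulmxA RRt mulmx1.
have E : forall i j, \sum_(I < 3) F i I * Rm j I = Vm i j.
  move=> i j; rewrite -FRt mxE; apply: eq_bigr => I _; by rewrite mxE.
transitivity (\sum_(j < 3) \sum_(I < 3) \sum_(i < 3) D j i * (F i I * Rm j I)).
  rewrite exchange_big; apply: eq_bigr => j _; apply: eq_bigr => I _.
  by rewrite mulr_suml; apply: eq_bigr => i _; rewrite mulrA.
transitivity (\sum_(j < 3) \sum_(i < 3) D j i * Vm i j).
  apply: eq_bigr => j _; rewrite exchange_big; apply: eq_bigr => i _.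
  by rewrite -mulr_sumr E.
rewrite exchange_big; apply: eq_bigr => i _; apply: eq_bigr => j _.
by rewrite mulrC.
Qed.
End Alg.

Section H.
Variable R : realType.
Local Notation vec := 'rV[R]_3.

Lemma derive_R (W : normedModType R) (f : vec -> W) x v :
  'D_v f x = 'D_1 (fun h : R => f (h *: v + x)) 0.
Proof.
rewrite /derive; set g1 := fun h => h^-1 *: _; set g2 := fun h => h^-1 *: _.
suff -> : g1 = g2 by [].
by rewrite funeqE /g1 /g2 => h /=; rewrite addr0 scale0r add0r [_%:A]mulr1.
Qed.

Lemma is_derive_expR_comp (f : vec -> R) x v d :
  is_derive x v f d -> is_derive x v (fun Y => expR (f Y)) (expR (f x) * d).
Proof.
move=> [Hd Hv].
have Hp : is_derive (0:R) (1:R) (fun h : R => f (h *: v + x)) d.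
  split; first exact: ((derivable1P _ _ _).1 Hd).
  by rewrite -derive_R.
have He := is_derive_expR ((fun h : R => f (h *: v + x)) 0).
have Hc := is_derive1_comp He Hp.
move: Hc; rewrite /= scale0r add0r => -[H1 H2].
split; first by apply/(derivable1P _ _ _).2; exact: H1.

by rewrite derive_R.
Qed.

Lemma chain_pd (chi : vec -> vec) (f : vec -> R) X I :
  differentiable chi X -> differentiable f (chi X) ->
  pd (f \o chi) I X = \sum_(i < 3) pd f i (chi X) * defgrad chi X i I.
Proof.
move=> dchi df.
rewrite /pd deriveE; last exact: differentiable_comp.
rewrite diff_comp //=.
have -> : 'd chi X (evec R I) = 'D_(evec R I) chi X by rewrite deriveE.
rewrite [w in 'd f _ w]row_sum_delta linear_sum; apply: eq_bigr => i _.
rewrite linearZ /= -deriveE // mulrC; congr (_ * _).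
rewrite derive_mx; last exact: diff_derivable.
by rewrite !mxE /pd /cmp.
Qed.

Lemma pd_sum n (h : 'I_n -> vec -> R) I X :
  (forall i, derivable (h i) X (evec R I)) ->
  pd (fun Y => \sum_(i < n) h i Y) I X = \sum_(i < n) pd (h i) I X.
Proof. by move=> d; rewrite /pd -fct_sumE derive_sum. Qed.

Lemma der_sum n (h : 'I_n -> vec -> R) I X :
  (forall i, derivable (h i) X (evec R I)) ->
  derivable (fun Y => \sum_(i < n) h i Y) X (evec R I).
Proof. by move=> d; rewrite -fct_sumE; apply: derivable_sum. Qed.

Lemma pd_mul (f g : vec -> R) I X :
  derivable f X (evec R I) -> derivable g X (evec R I) ->
  pd (fun Y => f Y * g Y) I X = f X * pd g I X + g X * pd f I X.
Proof. by move=> df dg; rewrite /pd (deriveM df dg). Qed.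

Lemma der_mul (f g : vec -> R) I X :
  derivable f X (evec R I) -> derivable g X (evec R I) ->
  derivable (fun Y => f Y * g Y) X (evec R I).
Proof. by move=> df dg; apply: (derivableM df dg). Qed.

Lemma ortho_deriv (Omega : set vec) (Rot : vec -> 'M[R]_3) X :
  open Omega -> Omega X ->
  (forall Y, Omega Y -> (Rot Y)^T *m Rot Y = 1%:M) ->
  (forall j k, differentiable (fun Y => Rot Y j k) X) ->
  forall I K M, \sum_(j < 3) (pd (fun Y => Rot Y j K) I X * Rot X j M
       + Rot X j K * pd (fun Y => Rot Y j M) I X) = 0.
Proof.
move=> oO OX orth dR I K M.
have nO : \forall Y \near X, Omega Y by apply: open_nbhs_nbhs; split.
have E : \forall Y \near X, (\sum_(j < 3) Rot Y j K * Rot Y j M) = (1%:M : 'M[R]_3) K M.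
  near=> Y; rewrite -(orth Y); last by near: Y.
  by rewrite mxE; apply: eq_bigr => j _; rewrite mxE.
have := near_eq_derive (evec R I) E.
rewrite derive_cst => H.
rewrite -[RHS]H -/(pd _ I X) pd_sum; last first.
  by move=> j; apply: der_mul; apply: diff_derivable.
apply: eq_bigr => j _; rewrite pd_mul; try by apply: diff_derivable.
by rewrite addrC mulrC [Rot X j M * _]mulrC.
Unshelve. all: by end_near.
Qed.

Lemma coord_diff (u0 : vec -> vec) X K :
  differentiable u0 X -> differentiable (fun Y => u0 Y 0 K) X.
Proof.
move=> d.
have -> : (fun Y => u0 Y 0 K) = (fun M : 'M[R]_(1,3) => M 0 K) \o u0 by [].
apply: differentiable_comp => //; exact: differentiable_coord.
Qed.

Lemma w_deriv (beta : vec -> R) (u0 : vec -> vec) (Rot : vec -> 'M[R]_3) X j I bI :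
  is_derive X (evec R I) beta bI ->
  differentiable u0 X -> (forall j k, differentiable (fun Y => Rot Y j k) X) ->
  pd (fun Y => expR (beta Y) * \sum_(K < 3) u0 Y 0 K * Rot Y j K) I X =
  expR (beta X) * bI * (\sum_(K < 3) u0 X 0 K * Rot X j K)
  + expR (beta X) * \sum_(K < 3) (pd (fun Y => cmp (u0 Y) K) I X * Rot X j K
       + u0 X 0 K * pd (fun Y => Rot Y j K) I X).
Proof.
move=> db du dR.
have de := is_derive_expR_comp _ _ _ _ db.
have dK : forall K, derivable (fun Y => u0 Y 0 K * Rot Y j K) X (evec R I).
  move=> K; apply: der_mul; apply: diff_derivable => //; exact: coord_diff.
rewrite pd_mul; [|by case: de|exact: der_sum].
rewrite /pd derive_val -/(pd _ I X) pd_sum //.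
rewrite addrC mulrC; congr (_ + _); congr (_ * _); apply: eq_bigr => K _.
rewrite pd_mul; try (apply: diff_derivable => //; exact: coord_diff).
by rewrite addrC mulrC.
Qed.

Lemma time_der (f : R -> vec) (c : R) (M : 'M[R]_3) t :
  derivable f t 1 ->
  derive1 (fun s => c *: (f s *m M)) t = c *: (derive1 f t *m M).
Proof.
move=> df.
have dfe := (derivable_mxP f t 1).1 df.
have de : forall b, derivable (fun s => c * \sum_(k < 3) f s 0 k * M k b) t 1.
  move=> b; apply: derivableM; first exact: derivable_cst.
  rewrite -fct_sumE; apply: derivable_sum => k.
  apply: derivableM => //; exact: derivable_cst.
have dg : derivable (fun s => c *: (f s *m M)) t 1.
  apply/derivable_mxP => i b; rewrite (ord1 i).
  suff -> : (fun s => (c *: (f s *m M)) 0 b) =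
            (fun s => c * \sum_(k < 3) f s 0 k * M k b) by [].
  by apply/funext => s; rewrite !mxE.
rewrite !derive1E (derive_mx dg) (derive_mx df).
apply/matrixP => i b; rewrite (ord1 i) !mxE.
have -> : (fun s => (c *: (f s *m M)) 0 b) =
          (c \*o (fun s => \sum_(k < 3) f s 0 k * M k b)) by apply/funext => s; rewrite !mxE.
rewrite deriveMl; last first.
  rewrite -fct_sumE; apply: derivable_sum => k.
  apply: derivableM => //; exact: derivable_cst.
congr (_ * _); rewrite -fct_sumE derive_sum; last first.
  move=> k; apply: derivableM => //; exact: derivable_cst.
apply: eq_bigr => k _; rewrite mxE.
have -> : (fun s => f s 0 k * M k b) = (M k b \o* (fun s => f s 0 k)) by [].
by rewrite deriveMr // mulrC.
Qed.

Lemma dotvE (x y : vec) : dotv x y = (x *m y^T) 0 0.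
Proof. by rewrite mxE; apply: eq_bigr => i _; rewrite mxE. Qed.

Lemma dot_rot (c : R) (a : vec) (Rm : 'M[R]_3) :
  Rm^T *m Rm = 1%:M ->
  dotv (c *: (a *m Rm^T)) (c *: (a *m Rm^T)) = c ^+ 2 * dotv a a.
Proof.
move=> RtR.
have Z : forall x y : vec, dotv (c *: x) (c *: y) = c ^+ 2 * dotv x y.
  move=> x y; rewrite /dotv mulr_sumr; apply: eq_bigr => i _; rewrite !mxE; ring.
rewrite Z; congr (_ * _); rewrite !dotvE trmx_mul trmxK.
by rewrite mulmxA -(mulmxA a) RtR mulmx1.
Qed.
End H.
Theorem lemma2 (R : realType) (Omega : set 'rV[R]_3)
  (chi : 'rV[R]_3 -> 'rV[R]_3)
  (Rot V : 'rV[R]_3 -> 'M[R]_3)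
  (beta : 'rV[R]_3 -> R) (kappa0 rho0 : R)
  (U u : 'rV[R]_3 -> R -> 'rV[R]_3) :
  (* Omega is a domain *)
  open Omega -> connected Omega ->
  (* chi is a differentiable one-to-one map of Omega onto omega = chi @` Omega *)
  (forall X, Omega X -> differentiable chi X) ->
  {in Omega &, injective chi} ->
  (* Jacobian positive *)
  (forall X, Omega X -> 0 < \det (defgrad chi X)) ->
  (* polar decomposition F = V R *)
  (forall X, Omega X ->
     defgrad chi X = V X *m Rot X /\
     (Rot X)^T *m Rot X = 1%:M /\ \det (Rot X) = 1 /\
     (V X)^T = V X /\
     (forall v : 'rV[R]_3, v != 0 -> 0 < (v *m V X *m v^T) 0 0) /\
     V X *m V X = defgrad chi X *m (defgrad chi X)^T) ->
  (* R is differentiable (so that b = R^t Div R^t is defined) *)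
  (forall X, Omega X -> forall j k : 'I_3, differentiable (fun Y => Rot Y j k) X) ->
  (* Curl b = 0 in Omega *)
  (forall X, Omega X -> curl (bfield Rot) X = 0) ->
  (* grad beta = b in Omega *)
  (forall X, Omega X -> has_gradient beta (bfield Rot X) X) ->
  0 < kappa0 -> 0 < rho0 ->
  (* regularity of the displacement U *)
  (forall X, Omega X -> forall t, differentiable (fun Y => U Y t) X) ->
  (forall X, Omega X -> forall t, derivable (U X) t 1) ->
  (* correspondence u = e^beta R U, u (differentiable) on omega *)
  (forall X, Omega X -> forall t, u (chi X) t = expR (beta X) *: (U X t *m (Rot X)^T)) ->
  (forall x, (chi @` Omega) x -> forall t, differentiable (fun y => u y t) x) ->
  (* conclusion: E dv = E0 dV with dv = Lambda dV, pointwise *)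
  forall X, Omega X -> forall t,
    let Lambda := \det (defgrad chi X) in
    let lam := Lambda^-1 * expR (- (2 * beta X)) * kappa0 in
    let rho := Lambda^-1 * expR (- (2 * beta X)) * rho0 in
    Emeta lam rho (V X) u (chi X) t * Lambda = E0 kappa0 rho0 U X t.
Proof.
move=> oO cO dchi inj detpos polar dR curl0 grad k0 r0 dU dUt ucorr udiff X OX t.
have [FVR [RtR [detR [Vsym [Vpos VV]]]]] := polar X OX.
have RRt : Rot X *m (Rot X)^T = 1%:M by apply: mulmx1C.
set e := expR (beta X).
have Kt : derive1 (u (chi X)) t = e *: (derive1 (U X) t *m (Rot X)^T).
  have -> : u (chi X) = fun s => e *: (U X s *m (Rot X)^T).
    by apply/funext => s; rewrite ucorr.
  exact: (@time_der _ _ _ _ _ (dUt X OX t)).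
have Ks : \sum_(i < 3) \sum_(j < 3) V X i j * pd (fun y => cmp (u y t) j) i (chi X)
   = e * \sum_(I < 3) pd (fun Y => cmp (U Y t) I) I X.
  rewrite -(@trace_alg _ (fun j i => pd (fun y => cmp (u y t) j) i (chi X)) _ _ _ FVR RRt).
  have dux : differentiable (fun y => u y t) (chi X) by apply: udiff; exists X.
  have nO : \forall Y \near X, Omega Y by apply: open_nbhs_nbhs; split.
  have G : forall j I, \sum_(i < 3) pd (fun y => cmp (u y t) j) i (chi X) * defgrad chi X i I
     = pd (fun Y => expR (beta Y) * \sum_(K < 3) U Y t 0 K * Rot Y j K) I X.
    move=> j I; rewrite -chain_pd; [|exact: dchi|exact: coord_diff].
    apply: near_eq_derive; near=> Y.
    rewrite /= /cmp ucorr; last by near: Y.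
    rewrite !mxE; congr (_ * _); apply: eq_bigr => K _; by rewrite !mxE.
  under eq_bigr => I _ do under eq_bigr => j _ do rewrite G (@w_deriv _ _ _ _ _ _ _ _ (grad X OX I) (dU X OX t) (dR X OX)).
  apply: alg.
  - by move=> K M; rewrite -RtR mxE; apply: eq_bigr => j _; rewrite mxE.
  - move=> I K M; apply: (@ortho_deriv _ Omega Rot X oO OX).
      by move=> Y OY; have [_ [H _]] := polar Y OY.
    exact: dR.
  - by move=> K; rewrite mxE.
rewrite /Emeta /E0 Kt dot_rot // Ks.
set L := \det (defgrad chi X).
have L0 : L != 0 by rewrite gt_eqF // detpos.
have hE : expR (- (2 * beta X)) * (e * e) = 1.
  by rewrite /e -!expRD -[RHS]expR0; congr expR; ring.
transitivity ((L^-1 * L) * (expR (- (2 * beta X)) * (e * e)) *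
  (kappa0 * (\sum_(I < 3) pd (fun Y => cmp (U Y t) I) I X) ^+ 2
   + rho0 * dotv (derive1 (U X) t) (derive1 (U X) t))); first by ring.
by rewrite mulVf // hE !mul1r.
Unshelve. all: by end_near.
Qed.
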